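(* Let $G$ be a graph containing a cycle $C_n$ as a subgraph, where $n\ge 5$ is an integer not divisible by $4$. Then $G$ is a $4$-$\chi_\rho$-critical graph if and only if $G$ is isomorphic to $C_n$.
   Context: Graphs are finite and simple. A $k$-packing coloring of $G$ is a map $c:V(G)\to\{1,\ldots,k\}$ such that two distinct vertices $u,v$ with $c(u)=c(v)=i$ satisfy $d_G(u,v)>i$ (distance between vertices in different components is infinite); $\chi_\rho(G)$ is the smallest $k$ for which such a coloring exists. $G$ is $\chi_\rho$-critical if $\chi_\rho(H)<\chi_\rho(G)$ for every proper subgraph $H$ of $G$, and $4$-$\chi_\rho$-critical if moreover $\chi_\rho(G)=4$. *)

(* Defs.v *)
From mathcomp Require Import all_boot.
Set Implicit Arguments. Unset Strict Implicit. Unset Printing Implicit Defensive.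

Section PackingDefs.
Variable T : finType.

(* A (sub)graph is given by a vertex set S : {set T} and an edge relation
   f : rel T (meant to be symmetric, irreflexive and to live on S). *)

(* within f k u v : there is a walk of length at most k from u to v using
   edges of f, i.e. d(u,v) <= k (infinite distance = no such walk). *)
Fixpoint within (f : rel T) (k : nat) (u v : T) : bool :=
  if k is k'.+1 then within f k' u v || [exists w, f u w && within f k' w v]
  else u == v.

Definition packing_coloring (S : {set T}) (f : rel T) (k : nat) (c : T -> nat)
  : bool :=
  [forall x in S, (1 <= c x <= k)] &&
  [forall u in S, forall v in S,
     ((u != v) && (c u == c v)) ==> ~~ within f (c u) u v].

Definition packing_colorable (S : {set T}) (f : rel T) (k : nat) : bool :=
  [exists c : {ffun T -> 'I_k.+1}, packing_coloring S f k (fun x => nat_of_ord (c x))].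

Lemma packing_colorable_card (S : {set T}) (f : rel T) :
  packing_colorable S f #|T|.
Proof.
apply/existsP.
exists [ffun x => inord (enum_rank x).+1 : 'I_#|T|.+1].
apply/andP; split.
  apply/forall_inP => x _; rewrite ffunE inordK; last by rewrite ltnS ltn_ord.
  by rewrite /= ltn_ord.
apply/forall_inP => u _; apply/forall_inP => v _; apply/implyP.
case/andP => uv; rewrite !ffunE.
rewrite !inordK ?ltnS ?ltn_ord //.
move/eqP=> [] /val_inj /enum_rank_inj Euv.
by rewrite Euv eqxx in uv.
Qed.

Lemma packing_colorable_ex (S : {set T}) (f : rel T) :
  exists k, packing_colorable S f k.
Proof. by exists #|T|; apply: packing_colorable_card. Qed.

Definition packing_chi (S : {set T}) (f : rel T) : nat :=
  ex_minn (packing_colorable_ex S f).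

Definition subgraph (e : rel T) (S : {set T}) (f : rel T) : Prop :=
  (forall u v, f u v -> [&& e u v, u \in S & v \in S]) /\ symmetric f.

Definition proper_subgraph (e : rel T) (S : {set T}) (f : rel T) : Prop :=
  subgraph e S f /\ (S != setT \/ exists u v, e u v && ~~ f u v).

Definition four_chi_rho_critical (e : rel T) : Prop :=
  packing_chi setT e = 4 /\
  forall S f, proper_subgraph e S f -> packing_chi S f < packing_chi setT e.

Definition cycle_adj (n : nat) (i j : 'I_n) : bool :=
  (nat_of_ord j == (i.+1 %% n)) || (nat_of_ord i == (j.+1 %% n)).

Definition contains_cycle (e : rel T) (n : nat) : Prop :=
  exists p : 'I_n -> T, injective p /\
    forall i j : 'I_n, cycle_adj i j -> e (p i) (p j).

Definition iso_cycle (e : rel T) (n : nat) : Prop :=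
  exists p : 'I_n -> T, bijective p /\
    forall i j : 'I_n, e (p i) (p j) = cycle_adj i j.

End PackingDefs.

(* Main.v *)
Require Import Defs.
From mathcomp Require Import all_boot.
From mathcomp Require Import zify.
Set Implicit Arguments. Unset Strict Implicit.
Ltac slia := repeat match goal with H : is_true (_ <= _) -> _ |- _ => clear H end; lia.

Lemma window (x0 x1 x2 x3 x4 x5 : nat) :
  1 <= x0 <= 3 -> 1 <= x1 <= 3 -> 1 <= x2 <= 3 -> 1 <= x3 <= 3 -> 1 <= x4 <= 3 -> 1 <= x5 <= 3 ->
  (1 <= x0 -> x1 <> x0) -> (2 <= x0 -> x2 <> x0) -> (3 <= x0 -> x3 <> x0) ->
  (1 <= x1 -> x2 <> x1) -> (2 <= x1 -> x3 <> x1) ->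
  (1 <= x2 -> x3 <> x2) -> (2 <= x2 -> x4 <> x2) -> (3 <= x2 -> x5 <> x2) ->
  (1 <= x3 -> x4 <> x3) -> (2 <= x3 -> x5 <> x3) ->
  (1 <= x4 -> x5 <> x4) ->
  x2 = 1 \/ x3 = 1.
Proof.
move=> r0 r1 r2 r3 r4 r5 a01 a02 a03 a12 a13 a23 a24 a25 a34 a35 a45.
case: (x2 =P 1) => [|h2]; first by left.
case: (x3 =P 1) => [|h3]; first by right.
exfalso.
have {}a23 : x3 <> x2 by apply: a23; slia.
have [[e2 e3]|[e2 e3]] : (x2 = 2 /\ x3 = 3) \/ (x2 = 3 /\ x3 = 2) by slia.
  subst x2 x3.
  have e1 : x1 = 1.
    case: (x1 =P 1) => // h1; exfalso.
    case: (x1 =P 2) => h1'; first by apply: a12; slia.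
    by apply: a13; slia.
  subst x1.
  case: (x0 =P 1) => h0; first by apply: a01; slia.
  case: (x0 =P 2) => h0'; first by apply: a02; slia.
  by apply: a03; slia.
subst x2 x3.
have e4 : x4 = 1.
  case: (x4 =P 1) => // h4; exfalso.
  case: (x4 =P 2) => h4'; first by apply: a34; slia.
  by apply: a24; slia.
subst x4.
case: (x5 =P 1) => h5; first by apply: a45; slia.
case: (x5 =P 2) => h5'; first by apply: a35; slia.
by apply: a25; slia.
Qed.

Lemma cyc (g : nat -> nat) n : 5 <= n -> ~~ (4 %| n) -> (forall m, g (m + n) = g m) ->
  (forall m, 1 <= g m <= 3) -> (forall m k, 1 <= k <= g m -> g (m + k) <> g m) ->
  False.
Proof.
move=> n5 n_not4 per rng sep.
have sep' a k : k <= g a -> 0 < k -> g (a + k) <> g a.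
  by move=> h1 h2; apply: sep; rewrite h2.
have sepN a b : a < b -> b - a <= g a -> g b <> g a.
  move=> ab ba; have := sep a (b - a); rewrite subnKC; last by lia.
  by apply; lia.
have W m : g (m+2) = 1 \/ g (m+3) = 1.
  refine (@window _ _ _ _ _ _ (rng m) (rng (m+1)) (rng (m+2)) (rng (m+3)) (rng (m+4)) (rng (m+5)) _ _ _ _ _ _ _ _ _ _ _).
  all: try move=> h.
  - by apply: (sepN m (m+1)); lia.
  - by apply: (sepN m (m+2)); lia.
  - by apply: (sepN m (m+3)); lia.
  - by apply: (sepN (m+1) (m+2)); lia.
  - by apply: (sepN (m+1) (m+3)); lia.
  - by apply: (sepN (m+2) (m+3)); lia.
  - by apply: (sepN (m+2) (m+4)); lia.
  - by apply: (sepN (m+2) (m+5)); lia.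
  - by apply: (sepN (m+3) (m+4)); lia.
  - by apply: (sepN (m+3) (m+5)); lia.
  - by apply: (sepN (m+4) (m+5)); lia.
have A m : g m = 1 \/ g (m+1) = 1.
  have := W (m + n - 2).
  have -> : m + n - 2 + 2 = m + n by lia.
  have -> : m + n - 2 + 3 = (m + 1) + n by lia.
  by rewrite !per.
have B m : g m = 1 -> g (m+1) <> 1.
  by move=> h; have := sep' m 1; rewrite h; apply.
have D m : (g (m+1) == 1) = (g m != 1).
  by have := A m; have := B m; case: eqP; case: eqP => //; lia.
have C m : g m <> 1 -> g (m+2) = 5 - g m.
  move=> h; have := A m; have := B (m+1); rewrite -addnA (_ : 1 + 1 = 2) //.
  have := sep' m 2; have := rng m; have := rng (m+2); lia.
have Par j m : (g (m + j) == 1) = (g m == 1) (+) odd j.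
  elim: j => [|j IH]; first by rewrite addn0 addbF.
  by rewrite addnS -addn1 D IH /=; case: (g m == 1); case: (odd j).
case: (boolP (odd n)) => [on|en].
  have := Par n 0; rewrite add0n -{1}(add0n n) per on.
  by case: (g 0 == 1).
have [m0 [m0r m0n]] : exists m0, m0 <= 1 /\ g m0 <> 1.
  case: (eqVneq (g 0) 1) => h.
    by exists 1; split => //; have := B 0 h.
  by exists 0; split => //; apply/eqP.
have Q j : g (m0 + 4 * j) = g m0 /\ g (m0 + 4 * j + 2) = 5 - g m0.
  elim: j => [|j [IH1 IH2]]; first by rewrite muln0 addn0; split => //; exact: C.
  have h1 : g (m0 + 4 * j.+1) = g m0.
    have -> : m0 + 4 * j.+1 = m0 + 4 * j + 2 + 2 by lia.
    rewrite C IH2 //; have := rng m0; lia.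
  split => //; rewrite C h1 //; lia.
have En : n = 4 * (n %/ 4) + 2.
  have e2 : n %% 2 = 0 by rewrite modn2; move: en; case: (odd n).
  move: n_not4; rewrite /dvdn; lia.
have := per m0; rewrite {1}En addnA (proj2 (Q _)); have := rng m0; lia.
Qed.
Lemma within_mono (T : finType) (f : rel T) a b u v :
  within f a u v -> a <= b -> within f b u v.
Proof.
move=> w; elim: b => [|b IH] ab; first by move: w; rewrite (_ : a = 0) //; lia.
case: (eqVneq a b.+1) => [<- //|ne].
by rewrite /= IH //; lia.
Qed.

Lemma no3 (T : finType) (S : {set T}) (f : rel T) n (p : 'I_n -> T) k :
  5 <= n -> ~~ (4 %| n) -> injective p -> (forall i, p i \in S) ->
  (forall i j, cycle_adj i j -> f (p i) (p j)) -> k <= 3 -> ~~ packing_colorable S f k.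
Proof.
move=> n5 n4 pinj pS padj k3; apply/negP => /existsP [c /andP [/forall_inP rngc /forall_inP sepc]].
have n0 : 0 < n by lia.
pose P m := p (Ordinal (ltn_pmod m n0)).
have Padj m : f (P m) (P (m+1)).
  by apply: padj; rewrite /cycle_adj /=; apply/orP; left; rewrite -[(m %% n).+1]addn1 modnDml eqxx.
have Pw j m : within f j (P m) (P (m + j)).
  elim: j m => [|j IH] m /=; first by rewrite addn0 eqxx.
  apply/orP; right; apply/existsP; exists (P (m+1)); rewrite Padj /=.
  by have -> : m + j.+1 = m + 1 + j by lia.
have Pper m : P (m + n) = P m.
  by rewrite /P; congr p; apply: val_inj => /=; exact: modnDr.
have Pne m j : 0 < j < n -> P m != P (m + j).
  move=> hj; apply/negP => /eqP /pinj /(congr1 val) /= /eqP.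
  rewrite -{1}(addn0 m) eqn_modDl mod0n modn_small; lia.
have PS m : P m \in S by exact: pS.
clearbody P.
apply: (@cyc (fun m => c (P m)) n n5 n4).
- by move=> m /=; rewrite Pper.
- move=> m /=; have := rngc (P m) (PS _); lia.
- move=> m j hj /= E.
  have := sepc (P m) (PS _) => /forall_inP /(_ (P (m+j)) (PS _)).
  rewrite Pne ?E ?eqxx /=; last by have := rngc (P m) (PS _); move: hj; set x := nat_of_ord (c (P m)); lia.
  by rewrite (within_mono (Pw j m)) //; case/andP: hj.
Qed.
Lemma modS_cases a n : a < n -> (a.+1 %% n = a.+1 /\ a.+1 < n) \/ (a.+1 %% n = 0 /\ a.+1 = n).
Proof.
move=> an; case: (ltngtP a.+1 n) => h; first by left; rewrite modn_small.
  lia.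
by right; rewrite h modnn.
Qed.

Definition cd n k i j := (j <= i + k /\ i <= j + k) \/ n + j <= i + k \/ n + i <= j + k.

Lemma cyc_within (T : finType) (e : rel T) n (p : 'I_n -> T) (g : T -> 'I_n) :
  cancel p g -> cancel g p -> (forall i j, e (p i) (p j) = cycle_adj i j) ->
  forall k u v, within e k u v -> cd n k (g u) (g v).
Proof.
move=> pK gK pe; elim=> [|k IH] u v /=.
  by move/eqP => ->; rewrite /cd; lia.
case/orP => [/IH|/existsP [w /andP [euw /IH]]]; first by rewrite /cd; lia.
move: euw; rewrite -(gK u) -(gK w) pe !pK /cycle_adj => /orP [] /eqP.
  have := modS_cases (ltn_ord (g u)); have := ltn_ord (g v); have := ltn_ord (g w);
  rewrite /cd; lia.
have := modS_cases (ltn_ord (g w)); have := ltn_ord (g v); have := ltn_ord (g u);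
rewrite /cd; lia.
Qed.

Definition col n i := if i == n - 1 then 4 else if i %% 2 == 0 then 1 else if i %% 4 == 1 then 2 else 3.

Lemma col_spec n i : (i = n - 1 /\ col n i = 4) \/ (i <> n - 1 /\ i %% 2 = 0 /\ col n i = 1) \/
  (i <> n - 1 /\ i %% 4 = 1 /\ col n i = 2) \/ (i <> n - 1 /\ i %% 4 = 3 /\ col n i = 3).
Proof.
rewrite /col; case: eqP => h1; first by left.
case: eqP => h2; first by right; left.
case: eqP => h3; first by right; right; left.
by right; right; right; split => //; split => //; lia.
Qed.

Lemma col_ok n i j : 5 <= n -> i < n -> j < n -> i <> j -> col n i = col n j -> cd n (col n i) i j -> False.
Proof.
move=> n5 ilt jlt ij E; rewrite /cd.
have := col_spec n i; have := col_spec n j; lia.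
Qed.

Lemma col4 (T : finType) (e : rel T) n (p : 'I_n -> T) (g : T -> 'I_n) :
  5 <= n -> cancel p g -> cancel g p -> (forall i j, e (p i) (p j) = cycle_adj i j) ->
  packing_colorable setT e 4.
Proof.
move=> n5 pK gK pe; apply/existsP; exists [ffun x => inord (col n (g x)) : 'I_5].
have cE x : nat_of_ord ([ffun x => inord (col n (g x)) : 'I_5] x) = col n (g x).
  by rewrite ffunE inordK //; have := col_spec n (g x); lia.
apply/andP; split.
  by apply/forall_inP => x _; rewrite cE; have := col_spec n (g x); lia.
apply/forall_inP => u _; apply/forall_inP => v _; apply/implyP => /andP [uv].
rewrite !cE => /eqP E; apply/negP => /(cyc_within pK gK pe) hc.
apply: (col_ok n5 (ltn_ord _) (ltn_ord _) _ E hc).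
by move/val_inj => guv; move: uv; rewrite -(gK u) -(gK v) guv eqxx.
Qed.
Definition pat m := if m %% 2 == 0 then 1 else if m %% 4 == 1 then 2 else 3.

Lemma pat_spec m : (m %% 2 = 0 /\ pat m = 1) \/ (m %% 4 = 1 /\ pat m = 2) \/ (m %% 4 = 3 /\ pat m = 3).
Proof.
rewrite /pat; case: eqP => h1; first by left.
case: eqP => h2; first by right; left.
by right; right; split => //; lia.
Qed.

Lemma path3 (T : finType) (e : rel T) n (p : 'I_n -> T) (g : T -> 'I_n) :
  cancel p g -> cancel g p -> (forall i j, e (p i) (p j) = cycle_adj i j) ->
  forall S f, proper_subgraph e S f -> packing_colorable S f 3.
Proof.
move=> pK gK pe S f [[fsub fsym] prop].
have ginj : injective g := can_inj gK.
have [i0 [i0n H0]] : exists i0, i0 < n /\ forall u v, f u v -> ~ (nat_of_ord (g u) = i0 /\ nat_of_ord (g v) = i0.+1 %% n).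
  case: prop => [Sne | [u [v /andP [euv nf]]]].
    have /subsetPn [x _ xS] : ~~ ([set: T] \subset S) by rewrite subTset.
    exists (g x); split => // u v fuv [/val_inj gu _].
    by move: (fsub _ _ fuv); rewrite (ginj _ _ gu) (negbTE xS) andbF.
  move: euv; rewrite -(gK u) -(gK v) pe /cycle_adj => /orP [] /eqP h.
    exists (g u); split => // u' v' fuv [/val_inj gu /eqP gv].
    rewrite -h in gv; move/val_inj: (eqP gv) => {}gv.
    by move: fuv; rewrite (ginj _ _ gu) (ginj _ _ gv) (negbTE nf).
  exists (g v); split => // u' v' fuv [/val_inj gu /eqP gv].
  rewrite -h in gv; move/val_inj: (eqP gv) => {}gv.
  by move: fuv; rewrite (ginj _ _ gu) (ginj _ _ gv) fsym (negbTE nf).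
clear prop.
pose t x := if i0 < g x then g x - i0 - 1 else g x + n - i0 - 1.
have t_spec x : (i0 < g x /\ t x = g x - i0 - 1) \/ (g x <= i0 /\ t x = g x + n - i0 - 1).
  by rewrite /t; case: (ltnP i0 (g x)) => hh; [left | right]; split.
clearbody t.
have fadj u v : f u v -> t u + 1 = t v \/ t v + 1 = t u.
  move=> fuv; have := H0 _ _ fuv; have := H0 v u; rewrite fsym => /(_ fuv).
  have : cycle_adj (g u) (g v) by rewrite -pe !gK; case/and3P: (fsub _ _ fuv).
  rewrite /cycle_adj => /orP [] /eqP h.
    have := ltn_ord (g v).
    case: (modS_cases (ltn_ord (g u))) => [][e1 e2]; rewrite {}e1 in h;
    case: (modS_cases i0n) => [][e3 e4]; rewrite {}e3;
    case: (t_spec u) => [][a1 a2]; case: (t_spec v) => [][b1 b2]; lia.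

  have := ltn_ord (g u).
  case: (modS_cases (ltn_ord (g v))) => [][e1 e2]; rewrite {}e1 in h;
  case: (modS_cases i0n) => [][e3 e4]; rewrite {}e3;
  case: (t_spec u) => [][a1 a2]; case: (t_spec v) => [][b1 b2]; lia.
have fw k u v : within f k u v -> t v <= t u + k /\ t u <= t v + k.
  elim: k u => [|k IH] u /=; first by move/eqP => ->; lia.
  case/orP => [/IH|/existsP [w /andP [fuw /IH]]]; first by lia.
  by have := fadj _ _ fuw; lia.
have tinj u v : t u = t v -> u = v.
  move=> E; apply: ginj; apply: ord_inj.
  by have := t_spec u; have := t_spec v; have := ltn_ord (g u); have := ltn_ord (g v); lia.
apply/existsP; exists [ffun x => inord (pat (t x)) : 'I_4].
have cE x : nat_of_ord ([ffun x => inord (pat (t x)) : 'I_4] x) = pat (t x).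
  by rewrite ffunE inordK //; have := pat_spec (t x); lia.
apply/andP; split.
  by apply/forall_inP => x _; rewrite cE; have := pat_spec (t x); lia.
apply/forall_inP => u _; apply/forall_inP => v _; apply/implyP => /andP [uv].
rewrite !cE => /eqP E; apply/negP => /fw hc.
move/eqP: uv; apply; apply: tinj.
by have := pat_spec (t u); have := pat_spec (t v); lia.
Qed.

Unset Implicit Arguments.
Theorem proposition3p2 (T : finType) (e : rel T)
  (e_sym : symmetric e) (e_irr : irreflexive e)
  (n : nat) (n_ge5 : 5 <= n) (n_not4 : ~~ (4 %| n))
  (HC : contains_cycle e n) :
  four_chi_rho_critical e <-> iso_cycle e n.
Proof.
split.
- move=> [chi4 crit].
  case: HC => p [pinj padj].
  pose S := p @: [set: 'I_n].
  pose f := fun u v => [exists i, exists j, [&& u == p i, v == p j & cycle_adj i j]].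
  have pS i : p i \in S by apply: imset_f; rewrite inE.
  have fsub : subgraph e S f.
    split.
      move=> u v /existsP [i /existsP [j /and3P [/eqP -> /eqP -> a]]].
      by rewrite padj // !pS.
    move=> u v; apply/existsP/existsP => [][i /existsP [j /and3P [a b c]]];
      exists j; apply/existsP; exists i; by rewrite a b /cycle_adj orbC.
  have lb : ~~ (packing_chi S f < 4).
    rewrite /packing_chi; case: ex_minnP => m Pm _; apply/negP => lt; move: Pm; apply/negP.
    apply: (@no3 _ S f n p m n_ge5 n_not4 pinj pS); last by lia.
    by move=> i j a; apply/existsP; exists i; apply/existsP; exists j; rewrite !eqxx a.
  case: (boolP (S == setT)) => [/eqP ST | Sne]; last first.
    by have := crit S f (conj fsub (or_introl Sne)); rewrite chi4 (negbTE lb).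
  case: (boolP [exists u, exists v, e u v && ~~ f u v]) => [/existsP [u /existsP [v h]] | noe].
    by have := crit S f (conj fsub (or_intror (ex_intro _ u (ex_intro _ v h)))); rewrite chi4 (negbTE lb).
  exists p; split.
    apply: inj_card_bij => //.
    have -> : #|T| = #|S| by rewrite ST cardsT.
    by apply: leq_trans (leq_imset_card _ _) _; rewrite cardsT.
  move=> i j; apply/idP/idP => [eij|/padj //].
  have : f (p i) (p j).
    by move: noe => /existsPn /(_ (p i)) /existsPn /(_ (p j)); rewrite eij /= negbK.
  by case/existsP => i' /existsP [j' /and3P [/eqP /pinj -> /eqP /pinj ->]].
- move=> [p [pbij pe]]; case: pbij => g pK gK.
  have chi4 : packing_chi setT e = 4.
    rewrite /packing_chi; case: ex_minnP => m Pm Hmin.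
    have m4 := Hmin 4 (col4 n_ge5 pK gK pe).
    apply/eqP; rewrite eqn_leq m4 /= leqNgt; apply/negP => lt.
    move: Pm; apply/negP.
    apply: (@no3 _ setT e n p m n_ge5 n_not4 (can_inj pK) (fun i => in_setT (p i)) _ _).
      by move=> i j a; rewrite pe.
    lia.
  split => // S f prop; rewrite chi4 /packing_chi; case: ex_minnP => m Pm Hmin.
  have := Hmin 3 (path3 pK gK pe prop); lia.
Qed.
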